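(* Let $m,v,x>0$, $w\geq 0$ and $u\in\mathbb{R}$. Let $\mathfrak{n}$ be the five-dimensional real Lie algebra with basis $\{E_1,\dots,E_5\}$ whose only non-vanishing brackets (up to antisymmetry) are $$[E_1,E_2]=mE_3+uE_5,\qquad [E_1,E_3]=vE_4+wE_5,\qquad [E_1,E_4]=xE_5.$$ Equip the corresponding simply connected nilpotent Lie group with the left-invariant Riemannian metric for which $\{E_1,\dots,E_5\}$ is orthonormal. Then this metric is an algebraic Ricci soliton if and only if $$x=m,\qquad u=w=0,\qquad v=\tfrac{2}{\sqrt3}m.$$ In that case $$c=-2m^2,\qquad D=\mathrm{diag}\big(\tfrac13m^2,\tfrac32m^2,\tfrac{11}6m^2,\tfrac{13}6m^2,\tfrac52m^2\big),$$ where $D$ is written as a matrix with respect to the basis $\{E_1,\dots,E_5\}$.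
   Context: Let $G$ be a Lie group with Lie algebra $\mathfrak{g}$ and let $g$ be a left-invariant Riemannian metric on $G$. Let $\mathrm{Ric}$ denote the $(1,1)$ Ricci tensor of $g$, viewed as a linear endomorphism of $\mathfrak{g}$. The metric $g$ is an algebraic Ricci soliton if there are a real number $c$ and a derivation $D$ of $\mathfrak{g}$ such that $\mathrm{Ric}=c\,\mathrm{Id}+D$. The notation $\mathrm{diag}(a_1,\dots,a_5)$ denotes the diagonal matrix with these entries. *)

(* Defs.v *)
(* Real scalars: an arbitrary real closed field R
   (the statement is purely algebraic; R = the reals is an instance). *)
From HB Require Import structures.
From mathcomp Require Import all_boot all_order all_algebra.
Set Implicit Arguments. Unset Strict Implicit. Unset Printing Implicit Defensive.
Import Order.TTheory GRing.Theory Num.Theory.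
Local Open Scope ring_scope.

Section MetricLie.
Variables (R : rcfType) (n : nat).

(* Vectors of the Lie algebra are row vectors of coordinates with respect to
   the basis E_0, ..., E_(n-1); the metric makes this basis orthonormal. *)
Definition ebasis (k : 'I_n) : 'rV[R]_n := delta_mx 0 k.

Definition lbracket (C : 'I_n -> 'I_n -> 'rV[R]_n) (X Y : 'rV[R]_n) : 'rV[R]_n :=
  \sum_(i < n) \sum_(j < n) (X 0 i * Y 0 j) *: C i j.

Definition linner (X Y : 'rV[R]_n) : R := \sum_(i < n) X 0 i * Y 0 i.

(* Levi-Civita connection on left-invariant fields (Koszul formula):
   <nabla_X Y, Z> = 1/2 (<[X,Y],Z> - <[Y,Z],X> + <[Z,X],Y>). *)
Definition lnabla C (X Y : 'rV[R]_n) : 'rV[R]_n :=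
  \sum_(k < n) ((linner (lbracket C X Y) (ebasis k)
                - linner (lbracket C Y (ebasis k)) X
                + linner (lbracket C (ebasis k) X) Y) / 2%:R) *: ebasis k.

Definition lcurv C (X Y Z : 'rV[R]_n) : 'rV[R]_n :=
  lnabla C X (lnabla C Y Z) - lnabla C Y (lnabla C X Z)
  - lnabla C (lbracket C X Y) Z.

Definition lric C (X Y : 'rV[R]_n) : R :=
  \sum_(k < n) linner (lcurv C (ebasis k) X Y) (ebasis k).

(* The (1,1) Ricci tensor as a matrix w.r.t. the orthonormal basis
   (entries Ric(E_i, E_j); endomorphisms act on row vectors by X *m M). *)
Definition ricci_mx C : 'M[R]_n := \matrix_(i < n, j < n) lric C (ebasis i) (ebasis j).

Definition is_derivation C (D : 'M[R]_n) : Prop :=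
  forall X Y : 'rV[R]_n,
    lbracket C X Y *m D = lbracket C (X *m D) Y + lbracket C X (Y *m D).

Definition algebraic_ricci_soliton C : Prop :=
  exists (c : R) (D : 'M[R]_n), is_derivation C D /\ ricci_mx C = c%:M + D.

End MetricLie.

(* The five-dimensional Lie algebra n of the statement.  Index k : 'I_5
   corresponds to the basis vector E_(k+1). *)
Definition E5 {R : rcfType} (k : nat) : 'rV[R]_5 := @ebasis R 5 (inord k).

Definition brk5 {R : rcfType} (m u v w x : R) (i j : 'I_5) : 'rV[R]_5 :=
  match nat_of_ord i, nat_of_ord j with
  | 0%N, 1%N => m *: E5 2 + u *: E5 4
  | 1%N, 0%N => - (m *: E5 2 + u *: E5 4)
  | 0%N, 2%N => v *: E5 3 + w *: E5 4
  | 2%N, 0%N => - (v *: E5 3 + w *: E5 4)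
  | 0%N, 3%N => x *: E5 4
  | 3%N, 0%N => - (x *: E5 4)
  | _, _ => 0
  end.

Definition diag5 {R : rcfType} (a1 a2 a3 a4 a5 : R) : 'M[R]_5 :=
  diag_mx (\row_(i < 5) nth 0 [:: a1; a2; a3; a4; a5] i).

(* Main.v *)
Require Import Defs.
From HB Require Import structures.
From mathcomp Require Import all_boot all_order all_algebra.
From mathcomp Require Import ring lra.
Import Order.TTheory GRing.Theory Num.Theory.
Local Open Scope ring_scope.

Section S.
Variable R : rcfType.

Definition mk5 (a b c d e : R) : 'rV[R]_5 := \row_(i < 5) nth 0 [:: a; b; c; d; e] i.

Lemma sum5 (F : 'I_5 -> R) :
  \sum_(i < 5) F i = F (inord 0) + F (inord 1) + F (inord 2) + F (inord 3) + F (inord 4).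
Proof.
rewrite !big_ord_recl big_ord0 addr0 !addrA.
by congr (_ + _ + _ + _ + _); congr F; apply/val_inj; rewrite /= inordK.
Qed.

Lemma sum5v (F : 'I_5 -> 'rV[R]_5) :
  \sum_(i < 5) F i = F (inord 0) + F (inord 1) + F (inord 2) + F (inord 3) + F (inord 4).
Proof.
rewrite !big_ord_recl big_ord0 addr0 !addrA.
by congr (_ + _ + _ + _ + _); congr F; apply/val_inj; rewrite /= inordK.
Qed.

Lemma mk5_add a b c d e a' b' c' d' e' :
  mk5 a b c d e + mk5 a' b' c' d' e' = mk5 (a + a') (b + b') (c + c') (d + d') (e + e').
Proof. by apply/rowP => i; rewrite !mxE; case: i => [[|[|[|[|[|]]]]] ?]. Qed.

Lemma mk5_opp a b c d e : - mk5 a b c d e = mk5 (- a) (- b) (- c) (- d) (- e).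
Proof. by apply/rowP => i; rewrite !mxE; case: i => [[|[|[|[|[|]]]]] ?]. Qed.

Lemma mk5_sub a b c d e a' b' c' d' e' :
  mk5 a b c d e - mk5 a' b' c' d' e' = mk5 (a - a') (b - b') (c - c') (d - d') (e - e').
Proof. by rewrite mk5_opp mk5_add. Qed.

Lemma mk5_scale s a b c d e : s *: mk5 a b c d e = mk5 (s * a) (s * b) (s * c) (s * d) (s * e).
Proof. by apply/rowP => i; rewrite !mxE; case: i => [[|[|[|[|[|]]]]] ?] //=; rewrite mulr0. Qed.

Lemma mk5_zero : (0 : 'rV[R]_5) = mk5 0 0 0 0 0.
Proof. by apply/rowP => i; rewrite !mxE; case: i => [[|[|[|[|[|]]]]] ?]. Qed.

Lemma mk5_eta (X : 'rV[R]_5) :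
  X = mk5 (X 0 (inord 0)) (X 0 (inord 1)) (X 0 (inord 2)) (X 0 (inord 3)) (X 0 (inord 4)).
Proof.
apply/rowP => i; rewrite !mxE; case: i => [[|[|[|[|[|]]]]] Hi] //=;
  congr (X _ _); try (by apply/val_inj; rewrite /= inordK); by apply: ord1.
Qed.

Lemma mk5_0 a b c d e : mk5 a b c d e 0 (inord 0) = a. Proof. by rewrite mxE inordK. Qed.
Lemma mk5_1 a b c d e : mk5 a b c d e 0 (inord 1) = b. Proof. by rewrite mxE inordK. Qed.
Lemma mk5_2 a b c d e : mk5 a b c d e 0 (inord 2) = c. Proof. by rewrite mxE inordK. Qed.
Lemma mk5_3 a b c d e : mk5 a b c d e 0 (inord 3) = d. Proof. by rewrite mxE inordK. Qed.
Lemma mk5_4 a b c d e : mk5 a b c d e 0 (inord 4) = e. Proof. by rewrite mxE inordK. Qed.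

Lemma eb (k : nat) : (k < 5)%N -> @ebasis R 5 (inord k) =
  mk5 (k == 0)%:R (k == 1)%:R (k == 2)%:R (k == 3)%:R (k == 4)%:R.
Proof.
move=> Hk; apply/rowP => i; rewrite !mxE /= -val_eqE /= inordK //.
by case: i => [[|[|[|[|[|]]]]] ?] //=; rewrite eq_sym.
Qed.

Variables (m u v w x : R).
Notation C := (brk5 m u v w x).

Lemma linner5 a0 a1 a2 a3 a4 b0 b1 b2 b3 b4 :
  linner (mk5 a0 a1 a2 a3 a4) (mk5 b0 b1 b2 b3 b4) = a0*b0 + a1*b1 + a2*b2 + a3*b3 + a4*b4.
Proof. by rewrite /linner sum5 !mk5_0 !mk5_1 !mk5_2 !mk5_3 !mk5_4. Qed.

Lemma E5E k : (k < 5)%N -> @E5 R k =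
  mk5 (k == 0)%:R (k == 1)%:R (k == 2)%:R (k == 3)%:R (k == 4)%:R.
Proof. exact: eb. Qed.

Lemma lbr5 a0 a1 a2 a3 a4 b0 b1 b2 b3 b4 :
  lbracket C (mk5 a0 a1 a2 a3 a4) (mk5 b0 b1 b2 b3 b4) =
  mk5 0 0 (m * (a0*b1 - a1*b0)) (v * (a0*b2 - a2*b0))
      (u * (a0*b1 - a1*b0) + w * (a0*b2 - a2*b0) + x * (a0*b3 - a3*b0)).
Proof.
rewrite /lbracket !sum5v !mk5_0 !mk5_1 !mk5_2 !mk5_3 !mk5_4 /brk5 !inordK //=.
rewrite !E5E //= !mk5_scale !mk5_add !mk5_opp !mk5_zero !mk5_scale !mk5_add.
congr mk5; ring.
Qed.
Lemma nab5 a0 a1 a2 a3 a4 b0 b1 b2 b3 b4 :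
  lnabla C (mk5 a0 a1 a2 a3 a4) (mk5 b0 b1 b2 b3 b4) =
  mk5 ((m*a1*b2 + v*a2*b3 + (u*a1 + w*a2 + x*a3)*b4 + m*b1*a2 + v*b2*a3 + (u*b1 + w*b2 + x*b3)*a4) / 2%:R)
      ((- a0*(m*b2 + u*b4) - b0*(m*a2 + u*a4)) / 2%:R)
      ((m*(a0*b1 - a1*b0) - a0*(v*b3 + w*b4) - b0*(v*a3 + w*a4)) / 2%:R)
      ((v*(a0*b2 - a2*b0) - a0*x*b4 - b0*x*a4) / 2%:R)
      ((u*(a0*b1 - a1*b0) + w*(a0*b2 - a2*b0) + x*(a0*b3 - a3*b0)) / 2%:R).
Proof.
rewrite /lnabla !sum5v !eb // /= !lbr5 !linner5 !mk5_scale !mk5_add.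
by congr mk5; field.
Qed.
Lemma ric5 a0 a1 a2 a3 a4 b0 b1 b2 b3 b4 :
  lric C (mk5 a0 a1 a2 a3 a4) (mk5 b0 b1 b2 b3 b4) =
  (- (m^+2 + u^+2 + v^+2 + w^+2 + x^+2) * a0 * b0 - (m^+2 + u^+2) * a1 * b1
   + (m^+2 - v^+2 - w^+2) * a2 * b2 + (v^+2 - x^+2) * a3 * b3 + (u^+2 + w^+2 + x^+2) * a4 * b4
   - u*w*(a1*b2 + a2*b1) - u*x*(a1*b3 + a3*b1) - w*x*(a2*b3+a3*b2)
   + m*u*(a2*b4 + a4*b2) + v*w*(a3*b4 + a4*b3)) / 2%:R.
Proof.
rewrite /lric /lcurv sum5 !eb // /= !nab5 !lbr5 !nab5 !mk5_sub !linner5.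
by field.
Qed.
End S.
Arguments mk5 {R}.
Section S2.
Variable R : rcfType.

Lemma ordE k (H : (k < 5)%N) : Ordinal H = inord k :> 'I_5.
Proof. by apply/val_inj; rewrite /= inordK. Qed.

Lemma mulmx5 a0 a1 a2 a3 a4 (M : 'M[R]_5) :
  mk5 a0 a1 a2 a3 a4 *m M =
  mk5 (a0 * M (inord 0) (inord 0) + a1 * M (inord 1) (inord 0) + a2 * M (inord 2) (inord 0) + a3 * M (inord 3) (inord 0) + a4 * M (inord 4) (inord 0))
      (a0 * M (inord 0) (inord 1) + a1 * M (inord 1) (inord 1) + a2 * M (inord 2) (inord 1) + a3 * M (inord 3) (inord 1) + a4 * M (inord 4) (inord 1))
      (a0 * M (inord 0) (inord 2) + a1 * M (inord 1) (inord 2) + a2 * M (inord 2) (inord 2) + a3 * M (inord 3) (inord 2) + a4 * M (inord 4) (inord 2))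
      (a0 * M (inord 0) (inord 3) + a1 * M (inord 1) (inord 3) + a2 * M (inord 2) (inord 3) + a3 * M (inord 3) (inord 3) + a4 * M (inord 4) (inord 3))
      (a0 * M (inord 0) (inord 4) + a1 * M (inord 1) (inord 4) + a2 * M (inord 2) (inord 4) + a3 * M (inord 3) (inord 4) + a4 * M (inord 4) (inord 4)).
Proof.
apply/rowP => j; rewrite [LHS]mxE sum5 !mk5_0 !mk5_1 !mk5_2 !mk5_3 !mk5_4.
by case: j => [[|[|[|[|[|?]]]]] Hj] //; rewrite ordE ?mk5_0 ?mk5_1 ?mk5_2 ?mk5_3 ?mk5_4.
Qed.

Lemma mk5_inj {a0 a1 a2 a3 a4 b0 b1 b2 b3 b4 : R} :
  mk5 a0 a1 a2 a3 a4 = mk5 b0 b1 b2 b3 b4 :> 'rV[R]_5 ->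
  [/\ a0 = b0, a1 = b1, a2 = b2, a3 = b3 & a4 = b4].
Proof.
move=> H; split.
- by move: (congr1 (fun X : 'rV[R]_5 => X 0 (inord 0)) H); rewrite /= !mk5_0.
- by move: (congr1 (fun X : 'rV[R]_5 => X 0 (inord 1)) H); rewrite /= !mk5_1.
- by move: (congr1 (fun X : 'rV[R]_5 => X 0 (inord 2)) H); rewrite /= !mk5_2.
- by move: (congr1 (fun X : 'rV[R]_5 => X 0 (inord 3)) H); rewrite /= !mk5_3.
- by move: (congr1 (fun X : 'rV[R]_5 => X 0 (inord 4)) H); rewrite /= !mk5_4.
Qed.

Lemma diag5E a0 a1 a2 a3 a4 i j : (i < 5)%N -> (j < 5)%N ->
  diag5 a0 a1 a2 a3 a4 (inord i) (inord j) = nth 0 [:: a0; a1; a2; a3; a4] i *+ (i == j) :> R.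
Proof.
by move=> Hi Hj; rewrite /diag5 !mxE -val_eqE /= !inordK.
Qed.

Lemma scalE (c : R) i j : (i < 5)%N -> (j < 5)%N ->
  (c%:M : 'M[R]_5) (inord i) (inord j) = c *+ (i == j).
Proof. by move=> Hi Hj; rewrite !mxE -val_eqE /= !inordK. Qed.

Variables (m u v w x : R).
Notation C := (brk5 m u v w x).

Lemma ricE i j : (i < 5)%N -> (j < 5)%N ->
  ricci_mx C (inord i) (inord j) = lric C (@ebasis R 5 (inord i)) (@ebasis R 5 (inord j)).
Proof. by move=> *; rewrite mxE. Qed.

Lemma eq_lin (L M t k : R) : L = M -> t = k * (L - M) -> t = 0.
Proof. by move=> -> ->; rewrite subrr mulr0. Qed.

Hypotheses (hm : 0 < m) (hv : 0 < v) (hx : 0 < x).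

Lemma key c (D : 'M[R]_5) : is_derivation C D -> ricci_mx C = c%:M + D ->
  [/\ x = m, u = 0, w = 0, v ^+ 2 = 4%:R / 3%:R * m ^+ 2 & c = - (2%:R * m ^+ 2)].
Proof.
move=> Hd Hr.
have HD : forall i j, (i < 5)%N -> (j < 5)%N ->
   D (inord i) (inord j) = ricci_mx C (inord i) (inord j) - c *+ (i == j).
  move=> i j Hi Hj; rewrite Hr mxE scalE //; ring.
have E01 := Hd (mk5 1 0 0 0 0) (mk5 0 1 0 0 0).
have E02 := Hd (mk5 1 0 0 0 0) (mk5 0 0 1 0 0).
have E03 := Hd (mk5 1 0 0 0 0) (mk5 0 0 0 1 0).
move: E01 E02 E03; rewrite !lbr5 !mulmx5 !lbr5 !HD // !ricE // !eb // !ric5 !mk5_add /=.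
move=> H1 H2 H3.
case: (mk5_inj H1) => _ _ e012 _ _.
case: (mk5_inj H2) => _ e021 e022 e023 _.
case: (mk5_inj H3) => _ _ _ _ e034.
have nm : m != 0 := lt0r_neq0 hm.
have nv : v != 0 := lt0r_neq0 hv.
have nx : x != 0 := lt0r_neq0 hx.
clear H1 H2 H3 HD Hr Hd.
have hu : u = 0.
  by apply: (@eq_lin _ _ _ (- 2%:R / (v * x)) e021); field; rewrite nx nv.
subst u.
have hw : w = 0.
  by apply: (@eq_lin _ _ _ (- 2%:R / (v * x)) e022); field; rewrite nx nv.
subst w.
have h1 : c + (3%:R * m ^+ 2 + x ^+ 2) / 2%:R = 0.
  by apply: (@eq_lin _ _ _ (1 / m) e012); field.
have h2 : c + 3%:R * v ^+ 2 / 2%:R = 0.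
  by apply: (@eq_lin _ _ _ (1 / v) e023); field.
have h3 : c + (m ^+ 2 + 3%:R * x ^+ 2) / 2%:R = 0.
  by apply: (@eq_lin _ _ _ (1 / x) e034); field.
clear e012 e021 e022 e023 e034.
have h13 : (c + (3%:R * m ^+ 2 + x ^+ 2) / 2%:R) - (c + (m ^+ 2 + 3%:R * x ^+ 2) / 2%:R) = 0.
  by rewrite h1 h3 subrr.
have hx2 : x ^+ 2 - m ^+ 2 = 0.
  by apply: (@eq_lin _ _ _ (- 1) h13); field.
have hxm : x = m.
  move/eqP: hx2; rewrite subr_eq0 eqf_sqr => /orP[/eqP //|/eqP hxm].
  by move: hx; rewrite hxm oppr_gt0 ltNge (ltW hm).
subst x.
have hc : c + 2%:R * m ^+ 2 = 0.
  by apply: (@eq_lin _ _ _ 1 h1); field.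
have hc' : c = - (2%:R * m ^+ 2) by apply/eqP; rewrite -addr_eq0; apply/eqP.
subst c.
split => //.
apply/eqP; rewrite -subr_eq0; apply/eqP.
by apply: (@eq_lin _ _ _ (2%:R / 3%:R) h2); field.
Qed.

Lemma entB (A B : 'M[R]_5) i j : (A - B) i j = A i j - B i j.
Proof. by rewrite !mxE. Qed.
Lemma entD (A B : 'M[R]_5) i j : (A + B) i j = A i j + B i j.
Proof. by rewrite !mxE. Qed.

Definition Dsol := diag5 (m ^+ 2 / 3%:R) (3%:R / 2%:R * m ^+ 2) (11%:R / 6%:R * m ^+ 2)
               (13%:R / 6%:R * m ^+ 2) (5%:R / 2%:R * m ^+ 2).

Lemma ricci_sol : x = m -> u = 0 -> w = 0 -> v ^+ 2 = 4%:R / 3%:R * m ^+ 2 ->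
  ricci_mx C = (- (2%:R * m ^+ 2))%:M + Dsol.
Proof.
move=> hxm hu hw hv2.
apply/matrixP => i j.
case: i => [[|[|[|[|[|?]]]]] Hi] //; case: j => [[|[|[|[|[|?]]]]] Hj] //.
all: by rewrite !ordE entD ricE // scalE // diag5E // !eb // ric5 /= hv2 ?hxm ?hu ?hw; field.
Qed.

Lemma der_sol : x = m -> u = 0 -> w = 0 -> is_derivation C Dsol.
Proof.
move=> hxm hu hw X Y.
rewrite (@mk5_eta R X) (@mk5_eta R Y) !lbr5 !mulmx5 !lbr5 !mk5_add !diag5E //= hxm hu hw.
by congr mk5; field.
Qed.

Lemma keyD c (D : 'M[R]_5) : is_derivation C D -> ricci_mx C = c%:M + D ->
  [/\ x = m, u = 0, w = 0, v ^+ 2 = 4%:R / 3%:R * m ^+ 2 & c = - (2%:R * m ^+ 2)] /\ D = Dsol.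
Proof.
move=> Hd Hr; have [hxm hu hw hv2 hc] := key _ _ Hd Hr.
split => //; move: Hr; rewrite ricci_sol // hc; by move/addrI=> <-.
Qed.
End S2.

Lemma sqrt3_facts (R : rcfType) : 0 < Num.sqrt (3%:R : R) /\ Num.sqrt (3%:R : R) ^+ 2 = 3%:R.
Proof. by split; [rewrite sqrtr_gt0 ltr0n | rewrite sqr_sqrtr // ler0n]. Qed.

Theorem mainTheorem4 (R : rcfType) (m v x w u : R) :
  0 < m -> 0 < v -> 0 < x -> 0 <= w ->
  (algebraic_ricci_soliton (brk5 m u v w x)
     <-> [/\ x = m, u = 0, w = 0 & v = 2%:R / Num.sqrt 3%:R * m])
  /\
  (forall (c : R) (D : 'M[R]_5),
     is_derivation (brk5 m u v w x) D ->
     ricci_mx (brk5 m u v w x) = c%:M + D ->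
     c = - (2%:R * m ^+ 2) /\
     D = diag5 (m ^+ 2 / 3%:R) (3%:R / 2%:R * m ^+ 2) (11%:R / 6%:R * m ^+ 2)
               (13%:R / 6%:R * m ^+ 2) (5%:R / 2%:R * m ^+ 2)).
Proof.
move=> hm hv hx _.
have [s0 s2] := sqrt3_facts R.
set s := Num.sqrt (3%:R : R) in s0 s2 *.
have ns : s != 0 := lt0r_neq0 s0.
have vE : v ^+ 2 = 4%:R / 3%:R * m ^+ 2 <-> v = 2%:R / s * m.
  split => [hv2|->].
    have h0 : (v - 2%:R / s * m) * (v + 2%:R / s * m) = 0.
      have -> : (v - 2%:R / s * m) * (v + 2%:R / s * m) = v ^+ 2 - 4%:R / s ^+ 2 * m ^+ 2.
        by field.
      by rewrite hv2 s2 subrr.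
    move/eqP: h0; rewrite mulf_eq0 => /orP[/eqP h|/eqP h].
      by apply/eqP; rewrite -subr_eq0; apply/eqP.
    have : 0 < v + 2%:R / s * m.
      by rewrite addr_gt0 // mulr_gt0 // divr_gt0 // ltr0n.
    by rewrite h ltxx.
  by rewrite exprMn expr_div_n s2; field.
split; last first.
  by move=> c D Hd Hr; have [[_ _ _ _ ->] ->] := @keyD _ _ _ _ _ _ hm hv hx _ _ Hd Hr.
split.
  move=> [c [D [Hd Hr]]]; have [[? ? ? hv2 _] _] := @keyD _ _ _ _ _ _ hm hv hx _ _ Hd Hr.
  by split => //; apply/vE.
move=> [hxm hu hw hvv].
exists (- (2%:R * m ^+ 2)), (@Dsol R m); split; first exact: der_sol.
by apply: ricci_sol => //; apply/vE.
Qed.
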